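(* Let $G$ be a finite group of even order and let $\mathcal{F}$ be a $1$-rotational $k$-factorization of $K_{\overline{G}}$. Then for every $F\in\mathcal{F}$, the $G$-stabilizer of $F$ contains at least one element of every conjugacy class of $G$ that contains involutions.
   Context: For a finite group $G$, $\overline{G}=G\cup\{\infty\}$, and $K_V$ denotes the complete graph on vertex set $V$. $G$ acts on $\overline{G}$ by right multiplication, with $\infty g=\infty$ for all $g\in G$; for a subgraph $F$ of $K_{\overline{G}}$ and $g\in G$, $Fg$ is the graph obtained by replacing every vertex $v$ by $vg$. A $k$-factor of $K_V$ is a spanning $k$-regular subgraph, and a $k$-factorization is a set of $k$-factors whose edge sets partition the edge set of $K_V$. A $k$-factorization $\mathcal{F}$ of $K_{\overline{G}}$ is $1$-rotational if $Fg\in\mathcal{F}$ for all $F\in\mathcal{F}$ and $g\in G$. The $G$-stabilizer of a factor $F$ is $\{g\in G: Fg=F\}$. An involution is an element of order $2$. *)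

(* Defs.v *)
From mathcomp Require Import all_boot all_fingroup.
Set Implicit Arguments. Unset Strict Implicit. Unset Printing Implicit Defensive.
Local Open Scope group_scope.

Section OneRot.
Variable gT : finGroupType.

(* Vertex set  G ∪ {∞}:  Some x = x ∈ G,  None = ∞ *)
Definition vtx := option gT.
Definition edge := {set vtx}.
Definition graph := {set edge}.

Definition is_edge (e : edge) : bool := #|e| == 2.
Definition Kedges : graph := [set e : edge | is_edge e].

Definition vact (v : vtx) (g : gT) : vtx := omap (fun x => x * g) v.
Definition eact (e : edge) (g : gT) : edge := [set vact v g | v in e].
Definition gact (F : graph) (g : gT) : graph := [set eact e g | e in F].

Definition deg (F : graph) (v : vtx) : nat := #|[set e in F | v \in e]|.

Definition is_kfactor (k : nat) (F : graph) : bool :=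
  (F \subset Kedges) && [forall v : vtx, deg F v == k].

Definition is_kfactorization (k : nat) (FF : {set graph}) : Prop :=
  (forall F, F \in FF -> is_kfactor k F) /\
  (forall e, e \in Kedges -> exists! F, F \in FF /\ e \in F).

Definition one_rotational (FF : {set graph}) : Prop :=
  forall F g, F \in FF -> gact F g \in FF.

Definition stabilizer (F : graph) : {set gT} := [set g | gact F g == F].

Definition involution (x : gT) : bool := #[x] == 2.
End OneRot.

(* Main.v *)
Require Import Defs.
From mathcomp Require Import all_boot all_fingroup.
Local Open Scope group_scope.

Section Aux.
Variable gT : finGroupType.

Lemma vactM (v : vtx gT) g h : vact (vact v g) h = vact v (g * h).
Proof. by case: v => [a|] //=; rewrite mulgA. Qed.

Lemma vact1 (v : vtx gT) : vact v 1 = v.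
Proof. by case: v => [a|] //=; rewrite mulg1. Qed.

Lemma eactM (e : edge gT) g h : eact (eact e g) h = eact e (g * h).
Proof.
rewrite /eact -imset_comp; apply: eq_imset => v /=; exact: vactM.
Qed.

Lemma eact1 (e : edge gT) : eact e 1 = e.
Proof.
rewrite /eact -[RHS]imset_id; apply: eq_imset => v; exact: vact1.
Qed.

Lemma gactM (F : graph gT) g h : Defs.gact (Defs.gact F g) h = Defs.gact F (g * h).
Proof.
rewrite /Defs.gact -imset_comp; apply: eq_imset => e /=; exact: eactM.
Qed.

Lemma gact1 (F : graph gT) : Defs.gact F 1 = F.
Proof.
rewrite /Defs.gact -[RHS]imset_id; apply: eq_imset => e; exact: eact1.
Qed.

Lemma vact_inj g : injective (fun v : vtx gT => vact v g).
Proof. by move=> [a|] [b|] //= [] /mulIg ->. Qed.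

Lemma eact_edge (e : edge gT) g : e \in Kedges gT -> eact e g \in Kedges gT.
Proof.
rewrite !inE /is_edge /eact card_imset //; exact: vact_inj.
Qed.

Lemma eact2 (u v : vtx gT) g : eact [set u; v] g = [set vact u g; vact v g].
Proof. by rewrite /eact imsetU1 imset_set1. Qed.

Lemma inf_edge (F : graph gT) k : is_kfactor k F -> 0 < k ->
  exists a, [set None; Some a] \in F.
Proof.
case/andP=> sub /forallP /(_ None) /eqP dk k0.
have : 0 < deg F None by rewrite dk.
rewrite /deg card_gt0 => /set0Pn [e]; rewrite inE => /andP [eF Ne].
have := subsetP sub e eF; rewrite inE /is_edge => /cards2P [u [v [uv de]]].
move: Ne; rewrite de !inE => /orP [/eqP Nu | /eqP Nv].
- subst u; case: v uv de => [a|] // _ de; exists a; by rewrite -de.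
- subst v; case: u uv de => [a|] // _ de; exists a; by rewrite setUC -de.
Qed.
End Aux.

Theorem mainTheorem2 (gT : finGroupType) (k : nat) (FF : {set graph gT}) :
  ~~ odd #|[set: gT]| ->
  is_kfactorization k FF ->
  one_rotational FF ->
  forall F, F \in FF ->
  forall x : gT, involution x ->
  exists2 g, g \in stabilizer F & g \in x ^: [set: gT].
Proof.
move=> _ [hfac huniq] hrot F FF_F x /eqP ox.
have uniq2 : forall F1 F2 e, F1 \in FF -> F2 \in FF -> e \in Kedges gT ->
    e \in F1 -> e \in F2 -> F1 = F2.
  move=> F1 F2 e h1 h2 he e1 e2; have [F0 [_ hF0]] := huniq e he.
  by rewrite -(hF0 F1 (conj h1 e1)) (hF0 F2 (conj h2 e2)).
have xx : x * x = 1 by have := expg_order x; rewrite ox expgS expg1.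
have x1 : x != 1 by apply/eqP => x1; move: ox; rewrite x1 order1.
set e0 : edge gT := [set Some 1; Some x].
have e0K : e0 \in Kedges gT.
  rewrite inE /is_edge cards2 (inj_eq (@Some_inj _)) eq_sym.
  by rewrite (eq_sym 1) x1.
have [F' [[FF' e0F'] _]] := huniq e0 e0K.
have fixF' : Defs.gact F' x = F'.
  apply: (uniq2 _ _ e0); rewrite ?hrot //.
  have -> : e0 = eact e0 x by rewrite eact2 /= mul1g xx setUC.
  by rewrite /Defs.gact; apply: imset_f.
have k0 : 0 < k.
  have /andP [_ /forallP /(_ (Some 1)) /eqP dk] := hfac F' FF'.
  rewrite -dk /deg card_gt0; apply/set0Pn; exists e0; rewrite !inE e0F'.
  by rewrite eqxx.
have [a eaF] := @inf_edge _ _ _ (hfac F FF_F) k0.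
have [b ebF'] := @inf_edge _ _ _ (hfac F' FF') k0.
set g := a^-1 * b.
have eF' : Defs.gact F g = F'.
  apply: (uniq2 _ _ [set None; Some b]); rewrite ?hrot //.
  - have := @eact_edge _ _ g (subsetP (proj1 (andP (hfac F FF_F))) _ eaF).
    by rewrite eact2 /= /g mulKVg.
  - have -> : [set None; Some b] = eact [set None; Some a] g.
      by rewrite eact2 /= /g mulKVg.
    by rewrite /Defs.gact; apply: imset_f.
exists (x ^ g^-1); last exact: memJ_class (in_setT _).
rewrite inE /conjg invgK -gactM -gactM eF' fixF' -eF' gactM mulgV gact1.
by [].
Qed.
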